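(* Let $h$ be a Hessenberg function on $\{1,\dots,n\}$. Every $(h,(n))$-filling occurs exactly once among the words at Level $n$ of the $h$-tableau-tree; i.e. the Level $n$ words are exactly all $(h,(n))$-fillings.
   Context: A Hessenberg function is $h:\{1,\dots,n\}\to\{1,\dots,n\}$, $h_i=h(i)$, with $i\le h_i$ and $h_i\le h_{i+1}$; degree tuple $\beta_i=i-\#\{k:h_k<i\}$. A word $u_1\cdots u_m$ of distinct numbers is $h$-permissible if $u_t\le h(u_{t+1})$ for all $t$; an $(h,(n))$-filling is an $h$-permissible permutation of $1,\dots,n$ written in one row. The $h$-tableau-tree: Level 1 is the word $1$; a vertex at Level $i-1$ is an $h$-permissible word $w$ on $\{1,\dots,i-1\}$, whose $\beta_i$ bullet positions are the gaps where inserting $i$ keeps the word $h$-permissible; its children at Level $i$ are joined by edges $x_i^j$, $0\le j\le\beta_i-1$, the child along $x_i^j$ being $w$ with $i$ inserted at the $(j+1)$-th bullet from the right. Each Level $n$ word has one leaf child at Level $n+1$ (edge label $1$), labelled by the product of edge labels on its root path. *)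

(* Defs.v *)
From mathcomp Require Import all_boot.
Set Implicit Arguments. Unset Strict Implicit. Unset Printing Implicit Defensive.

(* A Hessenberg function on {1,...,n}, represented as h : nat -> nat
   (only its values on 1..n matter). *)
Definition hessenberg (n : nat) (h : nat -> nat) : Prop :=
  (forall i, 1 <= i <= n -> i <= h i <= n) /\
  (forall i, 1 <= i < n -> h i <= h i.+1).

Definition permissible (h : nat -> nat) (u : seq nat) : bool :=
  uniq u && sorted (fun a b => a <= h b) u.

Definition filling (h : nat -> nat) (n : nat) (u : seq nat) : bool :=
  permissible h u && perm_eq u (iota 1 n).

(* insert x in the gap number k (counted from the left, 0 = before everything) *)
Definition insert_at (k : nat) (x : nat) (w : seq nat) : seq nat :=
  take k w ++ x :: drop k w.

Definition bullets (h : nat -> nat) (i : nat) (w : seq nat) : seq nat :=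
  [seq k <- iota 0 (size w).+1 | permissible h (insert_at k i w)].

(* children of w at the next level, along edges x_i^j, j = 0,1,...:
   the child along x_i^j inserts i at the (j+1)-th bullet from the right *)
Definition children (h : nat -> nat) (i : nat) (w : seq nat) : seq (seq nat) :=
  let B := rev (bullets h i w) in
  [seq insert_at (nth 0 B j) i w | j <- iota 0 (size B)].

(* level_words h k = list (with multiplicity) of the words at Level k.+1. *)
Fixpoint level_words (h : nat -> nat) (k : nat) : seq (seq nat) :=
  match k with
  | 0 => [:: [:: 1]]
  | k'.+1 => flatten [seq children h k.+1 w | w <- level_words h k']
  end.

Definition level (h : nat -> nat) (i : nat) : seq (seq nat) := level_words h i.-1.

(* Main.v *)
Require Import Defs.
From mathcomp Require Import all_boot.

Lemma path_rem (h : nat -> nat) (i : nat) (w : seq nat) (x : nat) :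
  uniq (x :: w) -> x != i -> all (fun a => a <= i) (x :: w) ->
  path (fun a b => a <= h b) x w ->
  path (fun a b => a <= h b) x [seq y <- w | y != i].
Proof.
elim: w x => [|z w IH] x //= Hu Hx Hall Hp.
case: (eqVneq z i) => [Ezi|Hzi] /=.
- subst z. case: w IH Hu Hall Hp => [|y w'] IH Hu Hall Hp //=.
  move: Hp => /= /and3P[Hxi Hiy Hp].
  have Hyi : y != i.
    by apply/eqP => E; move: Hu; rewrite E /= !inE eqxx /= andbF.
  apply: IH => //.
  + move: Hu => /= /andP[]; rewrite !inE !negb_or => /and3P[_ -> ->] /andP[_ /andP[-> ->]].
    done.
  + by move: Hall => /= /and4P[-> _ -> ->].
  + rewrite /= Hp andbT.
    move: Hall => /= /andP[Hxle _].
    have Hlt : x < i by rewrite ltn_neqAle Hx Hxle.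
    exact: leq_trans (ltnW Hlt) Hiy.
- move: Hp => /andP[Hxz Hp]; rewrite Hxz /=.
  apply: IH => //.
  + by move: Hu => /andP[_].
  + by move: Hall => /andP[_].
Qed.

Lemma sorted_rem (h : nat -> nat) (i : nat) (w : seq nat) :
  uniq w -> all (fun a => a <= i) w ->
  sorted (fun a b => a <= h b) w ->
  sorted (fun a b => a <= h b) [seq y <- w | y != i].
Proof.
case: w => [|x w] //= Hu Hall Hp.
case: (eqVneq x i) => [Exi|Hxi] /=.
- subst x. case: w Hu Hall Hp => [|y w'] //= Hu Hall /andP[_ Hp].
  have Hyi : y != i.
    by apply/eqP => E; move: Hu; rewrite E /= !inE eqxx.
  rewrite Hyi /=. apply: path_rem => //.
  + by move: Hu => /andP[_].
  + by move: Hall => /andP[_].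
- apply: path_rem => //.
Qed.

Lemma insert_props (i k : nat) (u : seq nat) :
  i \notin u -> k <= size u ->
  [/\ [seq y <- insert_at k i u | y != i] = u,
      perm_eq (insert_at k i u) (i :: u) &
      index i (insert_at k i u) = k].
Proof.
move=> Hi Hk; rewrite /insert_at.
have Ht : i \notin take k u by apply: contra Hi; apply: mem_take.
have Hd : i \notin drop k u by apply: contra Hi; apply: mem_drop.
split.
- rewrite filter_cat /= eqxx /=.
  have -> : [seq y <- take k u | y != i] = take k u.
    apply/all_filterP/allP => y Hy; apply/eqP => E; subst y; by rewrite Hy in Ht.
  have -> : [seq y <- drop k u | y != i] = drop k u.
    apply/all_filterP/allP => y Hy; apply/eqP => E; subst y; by rewrite Hy in Hd.
  by rewrite cat_take_drop.
- rewrite perm_catC /= perm_cons perm_catC cat_take_drop //.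
- by rewrite index_cat (negbTE Ht) /= eqxx addn0 size_takel.
Qed.

Arguments insert_props {i k u}.

Lemma count_children (h : nat -> nat) (i : nat) (u w : seq nat) :
  i \notin u ->
  count_mem w (children h i u) =
  permissible h w &&
  (has (fun k => insert_at k i u == w) (iota 0 (size u).+1)).
Proof.
move=> Hi.
rewrite /children.
set B := rev (bullets h i u).
have -> : [seq insert_at (nth 0 B j) i u | j <- iota 0 (size B)] =
          [seq insert_at k i u | k <- B].
  by rewrite -[in RHS](take_size B) -(map_nth_iota0 0 (leqnn _)) -map_comp.
rewrite count_map /B count_rev /bullets count_filter.
have Hinj : forall k, k \in iota 0 (size u).+1 ->
   ((insert_at k i u == w) && (fun x => permissible h (insert_at x i u)) k)
   = ((insert_at k i u == w) && permissible h w).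
  by move=> k _ /=; case: eqP => // ->.
rewrite (eq_in_count Hinj).
case: (boolP (has _ _)) => Hhas.
- case/hasP: Hhas => k0 Hk0 /eqP E.
  rewrite andbT.
  have Hk0' : k0 <= size u by move: Hk0; rewrite mem_iota add0n.
  have Heq : forall k, k \in iota 0 (size u).+1 ->
     ((insert_at k i u == w) && permissible h w) = (k == k0) && permissible h w.
    move=> k; rewrite mem_iota add0n ltnS => /andP[_ Hk] /=.
    congr andb; apply/eqP/eqP => [E2|->] //.
    have [_ _ H1] := insert_props Hi Hk.
    have [_ _ H2] := insert_props Hi Hk0'.
    by rewrite -H1 -H2 E2 E.
  rewrite (eq_in_count Heq).
  case: (permissible h w).
  + have -> : count (fun k => (k == k0) && true) (iota 0 (size u).+1) = count_mem k0 (iota 0 (size u).+1).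
      by apply: eq_count => k /=; rewrite andbT eq_sym.
    by rewrite count_uniq_mem ?iota_uniq // Hk0.
  + by rewrite (eq_count (a2 := pred0)) ?count_pred0 // => k; rewrite andbF.
- rewrite andbF; apply/eqP; rewrite -leqn0 leqNgt -has_count.
  apply: contra Hhas => /hasP[k Hk /andP[E _]]; apply/hasP; by exists k.
Qed.

Lemma has_insert (i : nat) (u w : seq nat) :
  1 <= i -> perm_eq u (iota 1 i.-1) ->
  has (fun k => insert_at k i u == w) (iota 0 (size u).+1) =
  perm_eq w (iota 1 i) && ([seq y <- w | y != i] == u).
Proof.
move=> Hi1 Hu.
have Hiota : perm_eq (i :: u) (iota 1 i).
  have -> : iota 1 i = rcons (iota 1 i.-1) i.
    have := iotaD 1 i.-1 1; rewrite addn1 prednK // cats1 add1n prednK //.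
  by rewrite perm_sym perm_rcons perm_cons perm_sym.
have Hi : i \notin u.
  by rewrite (perm_mem Hu) mem_iota add1n prednK // ltnn andbF.
apply/hasP/andP => [[k Hk /eqP E]|[Hw /eqP Hf]].
- rewrite mem_iota add0n ltnS in Hk.
  have [H1 H2 _] := insert_props Hi Hk.
  by rewrite -E H1; split => //; exact: perm_trans H2 Hiota.
- have Hwu : uniq w by rewrite (perm_uniq Hw) iota_uniq.
  have Hiw : i \in w by rewrite (perm_mem Hw) mem_iota add1n ltnSn Hi1.
  set k := index i w.
  have Hk : k < size w by rewrite index_mem.
  have Ew : w = take k w ++ i :: drop k.+1 w.
    by rewrite -(nth_index 0 Hiw) -drop_nth // cat_take_drop.
  have : uniq (take k w ++ i :: drop k.+1 w) by rewrite -Ew.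
  rewrite cat_uniq /= => /and3P[_ Hna /andP[Hnb _]].
  have Hta : i \notin take k w by apply: contra Hna => H; rewrite /= H.
  have Ef : [seq y <- w | y != i] = take k w ++ drop k.+1 w.
    rewrite {1}Ew filter_cat /= eqxx /=.
    congr (_ ++ _); apply/all_filterP/allP => y Hy; apply/eqP => E; subst y.
    + by rewrite Hy in Hta.
    + by rewrite Hy in Hnb.
  rewrite Ef in Hf.
  have Hsz : size (take k w) = k by rewrite size_takel // ltnW.
  exists k.
  + by rewrite -[0 :: _]/(iota 0 (size u).+1) mem_iota add0n ltnS -Hf size_cat Hsz leq_addr.
  + apply/eqP; rewrite /insert_at -Hf take_size_cat // drop_size_cat // -Ew.
Qed.

Lemma main_level (h : nat -> nat) (m : nat) (w : seq nat) :
  count_mem w (level_words h m) = filling h m.+1 w.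
Proof.
elim: m w => [|m IH] w.
- rewrite /= /filling /permissible addn0.
  case: (eqVneq w [:: 1]) => [->|Hne] //.
  case H: (_ && perm_eq _ _) => //; move/andP: H => [_ Hp].
  have := perm_size Hp; case: w Hne Hp => [|a [|b s]] //= Hne Hp _.
  move: (perm_mem Hp a); rewrite !inE eqxx /= => /esym/eqP E; subst a.
  by rewrite eqxx in Hne.
- rewrite /= count_flatten -map_comp.
  set L := level_words h m.
  have Hgood : forall u, u \in L -> perm_eq u (iota 1 m.+1).
    move=> u Hu; have := IH u; rewrite /filling.
    have : 0 < count_mem u L by rewrite -has_count has_pred1.
    by move=> H1 E; rewrite E lt0b in H1; case/andP: H1.
  have Heq : forall u, u \in L ->
     ((fun u => count_mem w (children h m.+2 u)) u) =
     (permissible h w && perm_eq w (iota 1 m.+2)) && (u == [seq y <- w | y != m.+2]).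
    move=> u Hu /=.
    have Hp := Hgood u Hu.
    have Hi : m.+2 \notin u by rewrite (perm_mem Hp) mem_iota ltnn andbF.
    rewrite count_children // has_insert //= -andbA; congr andb.
    by rewrite eq_sym.
  rewrite (eq_in_map _ (fun u => nat_of_bool ((permissible h w && perm_eq w (iota 1 m.+2)) && (u == [seq y <- w | y != m.+2]))) L).1 ?sumn_count; last exact: Heq.
  case: (boolP (permissible h w && perm_eq w (iota 1 m.+2))) => HP /=.
  + rewrite (eq_count (a2 := pred1 [seq y <- w | y != m.+2])) //.
    rewrite IH /filling; case/andP: HP => Hpw Hpe.
    rewrite /filling Hpw Hpe /=; apply/eqP; rewrite eqb1; apply/andP; split.
    * move: Hpw => /andP[Hu Hs]; rewrite /permissible filter_uniq //=.
      apply: sorted_rem => //; apply/allP => a Ha.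
      by move: Ha; rewrite (perm_mem Hpe) mem_iota add1n ltnS => /andP[].
    * have := perm_filter (fun y => y != m.+2) Hpe.
      have -> : [seq y <- iota 1 m.+2 | y != m.+2] = iota 1 m.+1.
        rewrite (_ : iota 1 m.+2 = iota 1 m.+1 ++ [:: m.+2]); last first.
          by have := iotaD 1 m.+1 1; rewrite addn1 add1n.
        rewrite filter_cat [X in _ ++ X]/= eqxx cats0.
        apply/all_filterP/allP => a; rewrite mem_iota add1n ltnS => /andP[_ Ha].
        by rewrite neq_ltn ltnS Ha.
      by apply.
  + rewrite /filling (negbTE HP).
    apply/eqP; rewrite -leqn0 leqNgt -has_count; apply/hasP => [[u _]].
    by [].
Qed.

Theorem mainTheorem15 (n : nat) (h : nat -> nat) :
  1 <= n -> hessenberg n h ->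
  forall w : seq nat, count_mem w (level h n) = filling h n w.
Proof.
case: n => [|m] // _ _ w.
by rewrite /level /= main_level.
Qed.
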